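(* Let $D$ and $X$ be finite sets and $w \colon \overline{D^X}\to\mathbb{R}$ a $(D,X)$-ranking function. Then $w$ is subset-monotone if and only if the following holds: for all partial assignments $\tau_1,\tau_2,\sigma_1,\sigma_2$ such that $\tau_i$ is disjoint from $\sigma_i$ for each $i\in\{1,2\}$, if $w(\tau_1)\le w(\tau_2)$ and $w(\sigma_1)\le w(\sigma_2)$, then $w(\tau_1\times\sigma_1)\le w(\tau_2\times\sigma_2)$.
   Context: A partial assignment on domain $D$ and variables $Y \subseteq X$ is a map $Y \to D\cup\{\bot\}$ ($\bot$ = undefined); $\overline{D^Y}$ is the set of these. Two partial assignments $\tau\in\overline{D^Y}$, $\sigma\in\overline{D^Z}$ are disjoint if $Y\cap Z=\emptyset$, and then $\tau\times\sigma\in\overline{D^{Y\cup Z}}$ agrees with $\tau$ on $Y$ and $\sigma$ on $Z$. A $(D,X)$-ranking function is any function $w\colon\overline{D^X}\to\mathbb{R}$; for $\tau \in \overline{D^Y}$ with $Y\subseteq X$, $w(\tau)$ denotes $w$ of the extension of $\tau$ assigning $\bot$ to all variables in $X\setminus Y$. $w$ is subset-monotone if for every $Y\subseteq X$, all $\tau_1,\tau_2\in\overline{D^Y}$ with $w(\tau_1)\le w(\tau_2)$, and all $\sigma\in\overline{D^{X\setminus Y}}$, we have $w(\sigma\times\tau_1)\le w(\sigma\times\tau_2)$. In the stated condition, $\tau_1,\tau_2$ (resp.\ $\sigma_1, \sigma_2$) are understood to range over partial assignments on a common variable set $Y$ (resp.\ $Z$) with $Y \cap Z = \emptyset$ and $Y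 \cup Z \subseteq X$. *)

(* Defs.v *)
From mathcomp Require Import all_boot.
From Stdlib Require Import Reals.
Set Implicit Arguments. Unset Strict Implicit. Unset Printing Implicit Defensive.

(* A total assignment with undefined values: an element of \bar{D^X},
   i.e. a map X -> D ∪ {⊥}, with ⊥ = None. *)
Definition passign (D X : finType) := {ffun X -> option D}.

(* A partial assignment tau ∈ \bar{D^Y} (Y ⊆ X) is represented by its
   extension to X that assigns ⊥ (None) to every variable outside Y.
   This is a bijection between \bar{D^Y} and the f satisfying [pa_on Y f]. *)
Definition pa_on (D X : finType) (Y : {set X}) (f : passign D X) : Prop :=
  forall x, x \notin Y -> f x = None.

(* Product tau × sigma of tau ∈ \bar{D^Y} and sigma ∈ \bar{D^Z}, Y ∩ Z = ∅:
   agrees with tau on Y and with sigma elsewhere (in particular on Z). *)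
Definition pa_prod (D X : finType) (Y : {set X}) (tau sigma : passign D X)
  : passign D X := [ffun x => if x \in Y then tau x else sigma x].

(* Subset-monotonicity of a ranking function w : \bar{D^X} -> R.
   For sigma ∈ \bar{D^{X\Y}} and tau ∈ \bar{D^Y}, sigma × tau agrees with tau on Y. *)
Definition subset_monotone (D X : finType) (w : passign D X -> R) : Prop :=
  forall (Y : {set X}) (tau1 tau2 sigma : passign D X),
    pa_on Y tau1 -> pa_on Y tau2 -> pa_on (~: Y) sigma ->
    (w tau1 <= w tau2)%R ->
    (w (pa_prod Y tau1 sigma) <= w (pa_prod Y tau2 sigma))%R.

(* Main.v *)
Require Import Defs.
From mathcomp Require Import all_boot.
From Stdlib Require Import Reals.

Theorem lemmaA1 (D X : finType) (w : passign D X -> R) :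
  subset_monotone w <->
  (forall (Y Z : {set X}) (tau1 tau2 sigma1 sigma2 : passign D X),
     [disjoint Y & Z] ->
     pa_on Y tau1 -> pa_on Y tau2 -> pa_on Z sigma1 -> pa_on Z sigma2 ->
     (w tau1 <= w tau2)%R -> (w sigma1 <= w sigma2)%R ->
     (w (pa_prod Y tau1 sigma1) <= w (pa_prod Y tau2 sigma2))%R).
Proof.
split.
- move=> SM Y Z t1 t2 s1 s2 dYZ h1 h2 h3 h4 l1 l2.
  have onC : forall s : passign D X, pa_on Z s -> pa_on (~: Y) s.
    move=> s hs x; rewrite /pa_on. rewrite inE negbK => xY; apply: hs.
    by rewrite (disjointFr dYZ xY).
  apply: Rle_trans (SM Y t1 t2 s1 h1 h2 (onC _ h3) l1) _.
  have E : forall s : passign D X, pa_prod Y t2 s = pa_prod (~: Y) s t2.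
    by move=> s; apply/ffunP => x; rewrite !ffunE in_setC; case: (x \in Y).
  rewrite !E; apply: SM => //; try exact: onC.
  move=> x; rewrite !inE negbK; exact: h2.
- move=> H Y t1 t2 s h1 h2 h3 l.
  apply: (H Y (~: Y)) => //; last exact: Rle_refl.
  by rewrite -subsets_disjoint subxx.
Qed.
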